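(* Let $X$ be a compact Hausdorff space and let $Y$ be a real inner product space with inner product $\langle\cdot,\cdot\rangle$ and norm $\|y\|=\langle y,y\rangle^{1/2}$. Let $C(X,Y)$ be the space of continuous functions $X\to Y$ with the uniform norm $|||f|||=\max_{x\in X}\|f(x)\|$, let $H\subset C(X,Y)$ be a linear subspace of finite dimension $n\ge1$, let $A$ be a compact Hausdorff space, and let $\{f_a\}_{a\in A}\subset C(X,Y)$ be such that $a\mapsto f_a$ is continuous from $A$ into $C(X,Y)$. Then $f^*\in H$ satisfies $\max_{a\in A}|||f_a-f^*|||\le\max_{a\in A}|||f_a-f|||$ for all $f\in H$ if and only if there exist an integer $k$ with $1\le k\le n+1$, elements $a_1,\dots,a_k\in A$, points $x_1,\dots,x_k\in X$, and positive numbers $\lambda_1,\dots,\lambda_k$ with $\sum_{i=1}^k\lambda_i=1$ such that (i') $\sum_{i=1}^k\lambda_i\langle f_{a_i}(x_i)-f^*(x_i),\, f(x_i)\rangle = 0$ for all $f\in H$; and (ii) $\|f_{a_i}(x_i)-f^*(x_i)\| = |||f_{a_i}-f^*||| = \max_{a\in A}|||f_a-f^*|||$ for all $i$ with $1\le i\le k$. *)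

(* Defs.v *)
From HB Require Import structures.
From mathcomp Require Import all_boot all_order all_algebra.
From mathcomp Require Import all_classical all_reals all_analysis.
Set Implicit Arguments. Unset Strict Implicit. Unset Printing Implicit Defensive.
Import Order.TTheory GRing.Theory Num.Theory.
Import numFieldNormedType.Exports.
Local Open Scope classical_set_scope.
Local Open Scope ring_scope.

Definition is_inner_product (R : realType) (Y : normedModType R)
  (ip : Y -> Y -> R) : Prop :=
  [/\ forall y z, ip y z = ip z y,
      forall (c : R) (y y' z : Y), ip (c *: y + y') z = c * ip y z + ip y' z,
      forall y, 0 <= ip y y
    & forall y, `|y| = Num.sqrt (ip y y)].

Definition unorm (R : realType) (X : Type) (Y : normedModType R)
  (f : X -> Y) : R := sup [set `|f x| | x in [set: X]].

Definition subspace_of_dim (R : realType) (X : topologicalType)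
  (Y : normedModType R) (H : set (X -> Y)) (n : nat) : Prop :=
  exists b : 'I_n -> X -> Y,
    [/\ forall i, continuous (b i),
        (forall c : 'I_n -> R, (forall x, \sum_(i < n) c i *: b i x = 0) ->
           forall i, c i = 0)
      & H = [set f | exists c : 'I_n -> R,
                f = (fun x => \sum_(i < n) c i *: b i x)]].

(* a |-> F a is continuous from A into (C(X,Y), |||.|||) *)
Definition unif_continuous_family (R : realType) (A X : topologicalType)
  (Y : normedModType R) (F : A -> X -> Y) : Prop :=
  (forall a, continuous (F a)) /\
  forall a (e : R), 0 < e -> \forall b \near a, forall x, `|F b x - F a x| < e.

Definition max_dev (R : realType) (A X : Type) (Y : normedModType R)
  (F : A -> X -> Y) (g : X -> Y) : R :=
  sup [set unorm (fun x => F a x - g x) | a in [set: A]].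

(* Main.v *)
Require Import Defs.
From HB Require Import structures.
From mathcomp Require Import all_boot all_order all_algebra.
From mathcomp Require Import all_classical all_reals all_analysis.
From mathcomp Require Import ring lra.
Set Implicit Arguments. Unset Strict Implicit. Unset Printing Implicit Defensive.
Import Order.TTheory GRing.Theory Num.Theory.
Import numFieldNormedType.Exports.
Local Open Scope classical_set_scope.
Local Open Scope ring_scope.
Lemma lin_dep (F : fieldType) m p (w : 'I_m -> 'I_p -> F) : (p < m)%N ->
  exists mu : 'I_m -> F, (exists i, mu i != 0) /\
     forall j, \sum_i mu i * w i j = 0.
Proof.
move=> pm.
pose M : 'M[F]_(m, p) := \matrix_(i, j) w i j.
have rK : (0 < \rank (kermx M))%N.
  by rewrite mxrank_ker subn_gt0 (leq_ltn_trans (rank_leq_col M)).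
have kn0 : kermx M != 0 by rewrite -mxrank_eq0 -lt0n.
have [i0 [i1 Hne]] : exists i j, kermx M i j != 0.
  case: (boolp.pselect (exists i j, kermx M i j != 0)) => // H.
  exfalso; move/negP: kn0; apply; apply/eqP/matrixP => i j.
  case: (eqVneq (kermx M i j) 0) => [->|Hij]; first by rewrite mxE.
  by exfalso; apply H; exists i, j.
exists (fun i => kermx M i0 i); split; first by exists i1.
move=> j; have E := congr1 (fun A : 'M[F]_(m, p) => A i0 j) (mulmx_ker M).
rewrite /= !mxE in E; rewrite -[RHS]E.
by apply: eq_bigr => i _; rewrite !mxE.
Qed.

Lemma carath1 (R : realType) n N (lam : 'I_N -> R) (u : 'I_N -> 'I_n -> R) :
  (n.+1 < N)%N -> (forall i, 0 <= lam i) -> \sum_i lam i = 1 ->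
  exists lam' : 'I_N -> R, [/\ forall i, 0 <= lam' i, \sum_i lam' i = 1,
    forall j, \sum_i lam' i * u i j = \sum_i lam i * u i j
    & exists i, lam' i = 0].
Proof.
move=> nN l0 l1.
case: (boolp.pselect (exists i, lam i = 0)) => [Hz|Hnz].
  by exists lam; split.
have lpos i : 0 < lam i.
  rewrite lt_def l0 andbT; apply/eqP => E; apply: Hnz; by exists i.
pose w (i : 'I_N) (j : 'I_n.+1) : R :=
  if unlift ord_max j is Some j' then u i j' else 1.
have [mu [[i1 mu1] Hmu]] := lin_dep w nN.
have smu : \sum_i mu i = 0.
  by have := Hmu ord_max; rewrite /w unlift_none; under eq_bigr do rewrite mulr1.
have smuu j : \sum_i mu i * u i j = 0.
  by have := Hmu (lift ord_max j); rewrite /w liftK.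
have [i2 mu2] : exists i, 0 < mu i.
  case: (boolp.pselect (exists i, 0 < mu i)) => // H; exfalso.
  have H' i : 0 <= - mu i.
    rewrite oppr_ge0 leNgt; apply/negP => Hi; apply: H; by exists i.
  have S0 : \sum_i - mu i = 0 by rewrite sumrN smu oppr0.
  have := psumr_eq0P (P := xpredT) (fun i _ => H' i) S0 (i:=i1) isT.
  by move/eqP; rewrite oppr_eq0 (negbTE mu1).
have [j0 muj jmin] : exists2 j0, 0 < mu j0 &
    forall i, 0 < mu i -> lam j0 / mu j0 <= lam i / mu i.
  case: (@arg_minP _ R _ i2 (fun i => 0 < mu i) (fun i => lam i / mu i)) => //= k Hk Hmin.
  by exists k.
pose t := lam j0 / mu j0.
have t0 : 0 <= t by rewrite /t divr_ge0 // ltW.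
exists (fun i => lam i - t * mu i); split.
- move=> i; rewrite subr_ge0.
  case: (ltrP 0 (mu i)) => Hi.
    rewrite -ler_pdivlMr //; exact: jmin.
  by apply: le_trans (l0 i); rewrite mulr_ge0_le0.
- by rewrite sumrB -mulr_sumr smu mulr0 subr0.
- move=> k; under eq_bigr do rewrite mulrBl -mulrA.
  by rewrite sumrB -mulr_sumr smuu mulr0 subr0.
- by exists j0; rewrite /t divfK ?subrr // lt0r_neq0.
Qed.

Lemma EVT_max_gen (T : topologicalType) (R : realType) (S : set T) (h : T -> R) :
  S !=set0 -> compact S -> continuous h ->
  exists2 c, S c & forall t, S t -> h t <= h c.
Proof.
move=> S0 cS ch.
have [c cS' Hc] := compact_EVT_max S0 cS (continuous_subspaceT (A := S) ch).
exists c; first by rewrite inE in cS'.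
by move=> t St; apply: Hc; rewrite inE.
Qed.

Lemma EVT_min_gen (T : topologicalType) (R : realType) (S : set T) (h : T -> R) :
  S !=set0 -> compact S -> continuous h ->
  exists2 c, S c & forall t, S t -> h c <= h t.
Proof.
move=> S0 cS ch.
have [c cS' Hc] := compact_EVT_min S0 cS (continuous_subspaceT (A := S) ch).
exists c; first by rewrite inE in cS'.
by move=> t St; apply: Hc; rewrite inE.
Qed.

Section Topo.
Variables (R : realType) (A X : topologicalType) (Y : normedModType R).
Variable F : A -> X -> Y.
Hypothesis hF : unif_continuous_family F.
Hypothesis cA : compact [set: A].
Hypothesis cX : compact [set: X].
Variables (a0 : A) (x0 : X).

Lemma F_joint : continuous (fun p : A * X => F p.1 p.2).
Proof.
move=> [b0 y0]; apply/cvgrPdist_lt => e e0.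
have e2 : 0 < e / 2 by rewrite divr_gt0.
have Ha := hF.2 b0 _ e2.
have Hx : \forall x \near y0, `|F b0 y0 - F b0 x| < e / 2.
  exact: (cvgrPdist_lt _ _).1 (hF.1 b0 y0) _ e2.
exists ([set b | forall x, `|F b x - F b0 x| < e / 2],
        [set x | `|F b0 y0 - F b0 x| < e / 2]); first by split.
move=> [b x] /= [Hb Hx'].
rewrite (le_lt_trans (ler_distD (F b0 x) _ _)) //.
by rewrite (splitr e) ltrD // distrC.
Qed.

Lemma cont_snd (g : X -> Y) : continuous g ->
  continuous (fun p : A * X => g p.2).
Proof.
move=> cg p; apply: (continuous_comp (f := snd) (g := g)); last exact: cg.
exact: cvg_snd.
Qed.

Lemma cont_diff (g : X -> Y) : continuous g ->
  continuous (fun p : A * X => F p.1 p.2 - g p.2).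
Proof.
move=> cg p.
have h1 : {for p, continuous (fun q : A * X => F q.1 q.2)} by apply: F_joint.
have h2 : {for p, continuous (fun q : A * X => g q.2)} by apply: cont_snd.
exact: (cvgB h1 h2).
Qed.

Lemma cAX : compact [set: A * X].
Proof. rewrite -setXTT; exact: compact_setX. Qed.

Lemma bound_diff (g : X -> Y) : continuous g ->
  exists M, forall a x, `|F a x - g x| <= M.
Proof.
move=> cg.
have [c _ Hc] := EVT_max_gen (S := [set: A * X])
  (h := fun p => `|F p.1 p.2 - g p.2|) (ex_intro _ (a0, x0) I) cAX
  (fun p => continuous_comp (cont_diff cg (x:=p)) (@norm_continuous _ _ _)).
by exists (`|F c.1 c.2 - g c.2|) => a x; apply: (Hc (a, x)).
Qed.

Lemma unorm_ge (g : X -> Y) : continuous g -> forall a x,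
  `|F a x - g x| <= unorm (fun y => F a y - g y).
Proof.
move=> cg a x; have [M HM] := bound_diff cg.
apply: sup_upper_bound; last by exists x.
split; first by exists `|F a x - g x|, x.
by exists M => _ [y _ <-]; apply: HM.
Qed.

Lemma unorm_le (g : X -> Y) a r :
  (forall x, `|F a x - g x| <= r) -> unorm (fun y => F a y - g y) <= r.
Proof.
move=> H; apply: ge_sup; first by exists `|F a x0 - g x0|, x0.
by move=> _ [y _ <-]; apply: H.
Qed.

Lemma max_dev_ge (g : X -> Y) : continuous g -> forall a,
  unorm (fun y => F a y - g y) <= max_dev F g.
Proof.
move=> cg a; have [M HM] := bound_diff cg.
apply: sup_upper_bound; last by exists a.
split; first by exists (unorm (fun y => F a y - g y)), a.
by exists M => _ [b _ <-]; apply: unorm_le.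
Qed.

Lemma max_dev_le (g : X -> Y) r :
  (forall a x, `|F a x - g x| <= r) -> max_dev F g <= r.
Proof.
move=> H; apply: ge_sup; first by exists (unorm (fun y => F a0 y - g y)), a0.
by move=> _ [b _ <-]; apply: unorm_le.
Qed.

End Topo.

Section IP.
Variables (R : realType) (Y : normedModType R) (ip : Y -> Y -> R).
Hypothesis hip : is_inner_product ip.

Lemma ipC y z : ip y z = ip z y.
Proof. by case: hip. Qed.

Lemma ip_lin c y y' z : ip (c *: y + y') z = c * ip y z + ip y' z.
Proof. by case: hip. Qed.

Lemma ip0l z : ip 0 z = 0.
Proof.
have := ip_lin 1 0 0 z; rewrite scaler0 addr0 mul1r => /eqP.
by rewrite -subr_eq subrr eq_sym => /eqP.
Qed.

Lemma ipDl y y' z : ip (y + y') z = ip y z + ip y' z.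
Proof. by rewrite -[y in LHS]scale1r ip_lin mul1r. Qed.

Lemma ipZl c y z : ip (c *: y) z = c * ip y z.
Proof. by rewrite -[_ *: _]addr0 ip_lin ip0l addr0. Qed.

Lemma ipNl y z : ip (- y) z = - ip y z.
Proof. by rewrite -scaleN1r ipZl mulN1r. Qed.

Lemma ipBl y y' z : ip (y - y') z = ip y z - ip y' z.
Proof. by rewrite ipDl ipNl. Qed.

Lemma ipDr y z z' : ip y (z + z') = ip y z + ip y z'.
Proof. by rewrite ipC ipDl !(ipC y). Qed.

Lemma ipZr c y z : ip y (c *: z) = c * ip y z.
Proof. by rewrite ipC ipZl ipC. Qed.

Lemma ipNr y z : ip y (- z) = - ip y z.
Proof. by rewrite ipC ipNl ipC. Qed.

Lemma ipBr y z z' : ip y (z - z') = ip y z - ip y z'.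
Proof. by rewrite ipC ipBl !(ipC y). Qed.

Lemma ip_sumr n (c : 'I_n -> R) (b : 'I_n -> Y) y :
  ip y (\sum_(i < n) c i *: b i) = \sum_(i < n) c i * ip y (b i).
Proof.
elim: n c b => [|n IH] c b; first by rewrite !big_ord0 ipC ip0l.
by rewrite !big_ord_recr /= ipDr IH ipZr.
Qed.

Lemma ip_ge0 y : 0 <= ip y y.
Proof. by case: hip. Qed.

Lemma normE2 y : `|y| ^+ 2 = ip y y.
Proof. by case: hip => _ _ h0 ->; rewrite sqr_sqrtr. Qed.

Lemma polar y z : ip y z = (`|y + z| ^+ 2 - `|y - z| ^+ 2) / 4.
Proof.
rewrite !normE2 !ipDl !ipNl !ipDr !ipNr (ipC z y).
by field.
Qed.

Lemma ip_cont (T : topologicalType) (f g : T -> Y) :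
  continuous f -> continuous g -> continuous (fun t => ip (f t) (g t)).
Proof.
move=> cf cg t.
have -> : (fun t => ip (f t) (g t)) =
   (fun t => (`|f t + g t| ^+ 2 - `|f t - g t| ^+ 2) / 4).
  by apply: boolp.funext => s; rewrite polar.
have hp : {for t, continuous (fun s => f s + g s)}.
  exact: (cvgD (cf t) (cg t)).
have hm : {for t, continuous (fun s => f s - g s)}.
  exact: (cvgB (cf t) (cg t)).
have np : {for t, continuous (fun s => `|f s + g s|)}.
  exact: (continuous_comp hp (@norm_continuous _ _ _)).
have nm : {for t, continuous (fun s => `|f s - g s|)}.
  exact: (continuous_comp hm (@norm_continuous _ _ _)).
apply: cvgM; last exact: cvg_cst.
apply: cvgB; rewrite expr2; exact: cvgM.
Qed.

Lemma ip_neg e z : `|e + z| ^+ 2 < `|e| ^+ 2 -> ip e z < 0.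
Proof.
rewrite !normE2 ipDl !ipDr (ipC z e).
have := ip_ge0 z; lra.
Qed.

End IP.

Lemma cont_sum (R : realType) (T : topologicalType) (Y : normedModType R) n
  (c : 'I_n -> R) (b : 'I_n -> T -> Y) : (forall i, continuous (b i)) ->
  continuous (fun x => \sum_(i < n) c i *: b i x).
Proof.
move=> hb; elim: n c b hb => [|n IH] c b hb t.
  under eq_fun do rewrite big_ord0; exact: cvg_cst.
under eq_fun do rewrite big_ord_recr /=.
apply: cvgD; first exact: (IH (fun i => c (widen_ord (leqnSn n) i))
   (fun i => b (widen_ord (leqnSn n) i))).
apply: cvgZ; [exact: cvg_cst | exact: hb].
Qed.

Section Main.
Variables (R : realType) (X : topologicalType) (Y : normedModType R).
Variables (ip : Y -> Y -> R) (H : set (X -> Y)) (n : nat) (A : topologicalType).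
Variables (F : A -> X -> Y) (fs : X -> Y) (b : 'I_n -> X -> Y).
Hypotheses (cX : compact [set: X]) (hip : is_inner_product ip) (n1 : (1 <= n)%N).
Hypotheses (hbc : forall i, continuous (b i))
  (hbi : forall c : 'I_n -> R, (forall x, \sum_(i < n) c i *: b i x = 0) ->
           forall i, c i = 0)
  (hHe : H = [set f | exists c : 'I_n -> R,
                f = (fun x => \sum_(i < n) c i *: b i x)]).
Hypotheses (cA : compact [set: A]) (hF : unif_continuous_family F) (Hfs : H fs).
Variables (a0 : A).

Lemma X_nonempty : exists x : X, True.
Proof.
case: (boolp.pselect (exists x : X, True)) => // H0; exfalso.
have : (1 : R) = 0.
  apply: (hbi (c := fun _ => 1) _ (Ordinal n1)) => x.
  by exfalso; apply: H0; exists x.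
by move/eqP; rewrite oner_eq0.
Qed.

Lemma H_cont f : H f -> continuous f.
Proof. by rewrite hHe => -[c ->]; apply: cont_sum. Qed.

Lemma H_lin (t : R) f g : H f -> H g -> H (fun x => f x + t *: g x).
Proof.
rewrite hHe => -[c ->] [d ->]; exists (fun i => c i + t * d i).
apply: boolp.funext => x; rewrite scaler_sumr -big_split /=.
by apply: eq_bigr => i _; rewrite scalerDl scalerA.
Qed.

Lemma H_basis c : H (fun x => \sum_(i < n) c i *: b i x).
Proof. by rewrite hHe; exists c. Qed.

Lemma dev_le (g : X -> Y) (x0 : X) : H g -> forall a x,
  `|F a x - g x| <= max_dev F g.
Proof.
move=> Hg a x; have cg := H_cont Hg.
exact: le_trans (unorm_ge hF cA cX a0 x0 cg a x) (max_dev_ge hF cA cX a0 x0 cg a).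
Qed.

Lemma easy_dir : (exists k : nat, (1 <= k <= n.+1)%N /\
    exists (a : 'I_k -> A) (x : 'I_k -> X) (lam : 'I_k -> R),
      [/\ forall i, 0 < lam i,
          \sum_(i < k) lam i = 1,
          (forall f, H f ->
             \sum_(i < k) lam i * ip (F (a i) (x i) - fs (x i)) (f (x i)) = 0)
        & forall i,
            `|F (a i) (x i) - fs (x i)| = unorm (fun y => F (a i) y - fs y) /\
            unorm (fun y => F (a i) y - fs y) = max_dev F fs]) ->
  forall f, H f -> max_dev F fs <= max_dev F f.
Proof.
move=> [k [/andP [k1 _] [a [x [lam [lpos _ hort hmax]]]]]] f Hf.
have [x0 _] := X_nonempty.
set E := max_dev F fs; set D := max_dev F f.
pose h := fun y => fs y + (-1) *: f y.
have Hh : H h by apply: H_lin.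
have := hort h Hh.
move=> S0; rewrite leNgt; apply/negP => DE.
suff : \sum_(i < k) lam i * ip (F (a i) (x i) - fs (x i)) (h (x i)) < 0.
  by rewrite S0 ltxx.
have neg i : ip (F (a i) (x i) - fs (x i)) (h (x i)) < 0.
  set e := F (a i) (x i) - fs (x i).
  have we : F (a i) (x i) - f (x i) = e + h (x i).
    by rewrite /e /h scaleN1r addrA subrK.
  have wD : `|F (a i) (x i) - f (x i)| <= D by apply: dev_le.
  have eE : `|e| = E by case: (hmax i) => -> ->.
  have D0 : 0 <= D := le_trans (normr_ge0 _) wD.
  have : `|F (a i) (x i) - f (x i)| ^+ 2 < `|e| ^+ 2.
    rewrite eE; have := normr_ge0 (F (a i) (x i) - f (x i)); nra.
  by rewrite we => /(ip_neg hip).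
have k0 : (0 < k)%N by [].
rewrite (bigD1 (Ordinal k0)) //=.
have h1 : lam (Ordinal k0) * ip (F (a (Ordinal k0)) (x (Ordinal k0)) -
   fs (x (Ordinal k0))) (h (x (Ordinal k0))) < 0.
  by rewrite pmulr_rlt0 // neg.
have h2 : \sum_(i < k | i != Ordinal k0)
     lam i * ip (F (a i) (x i) - fs (x i)) (h (x i)) <= 0.
  rewrite -oppr_ge0 -sumrN; apply: sumr_ge0 => i _.
  by rewrite oppr_ge0 pmulr_rle0 // ltW // neg.
lra.
Qed.


Definition ee (p : A * X) := F p.1 p.2 - fs p.2.
Definition EE := max_dev F fs.
Definition KK := [set p : A * X | `|ee p| = EE].

Lemma ee_cont : continuous ee.
Proof. exact: (cont_diff hF (H_cont Hfs)). Qed.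

Lemma cont_norm2 (T : topologicalType) (f : T -> Y) : continuous f ->
  continuous (fun t => `|f t| ^+ 2).
Proof.
move=> cf t.
have -> : (fun t => `|f t| ^+ 2) = (fun t => `|f t| * `|f t|).
  by apply: boolp.funext => s; rewrite expr2.
have h : {for t, continuous (fun s => `|f s|)}.
  exact: (continuous_comp (cf t) (@norm_continuous _ _ _)).
exact: cvgM.
Qed.

Lemma K1 (x0 : X) p : `|ee p| <= EE.
Proof. exact: (dev_le x0 Hfs). Qed.

Lemma K2 : exists p, KK p.
Proof.
have [x0 _] := X_nonempty.
have [c _ Hc] := EVT_max_gen (S := [set: A * X]) (h := fun p => `|ee p|)
  (ex_intro _ (a0, x0) I) (cAX cA cX)
  (fun p => continuous_comp (ee_cont (x:=p)) (@norm_continuous _ _ _)).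
exists c; apply/eqP; rewrite eq_le K1 //=.
apply: (max_dev_le a0 x0) => a x; exact: (Hc (a, x)).
Qed.

Lemma K3 p : KK p ->
  `|F p.1 p.2 - fs p.2| = unorm (fun y => F p.1 y - fs y) /\
  unorm (fun y => F p.1 y - fs y) = EE.
Proof.
move=> Kp; have [x0 _] := X_nonempty.
have cg := H_cont Hfs.
have h1 := unorm_ge hF cA cX a0 x0 cg p.1 p.2.
have h2 := max_dev_ge hF cA cX a0 x0 cg p.1.
rewrite /KK /ee /= in Kp; rewrite /EE in Kp *.
have h3 := le_trans h1 h2; rewrite Kp in h1 h3.
by split; apply/eqP; rewrite eq_le ?Kp ?h1 ?h2.
Qed.

Lemma KK_compact : compact KK.
Proof.
rewrite -(setTI KK); apply: compact_closedI; first exact: cAX.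
have cE : closed [set r : R | r = EE] by exact: closed_eq.
exact: ((continuous_closedP (fun p => `|ee p|)).1
  (fun p => continuous_comp (ee_cont (x:=p)) (@norm_continuous _ _ _))
  _ cE).
Qed.

Lemma norm_sub2 (y z : Y) (t : R) :
  `|y - t *: z| ^+ 2 = `|y| ^+ 2 - 2 * t * ip y z + t ^+ 2 * `|z| ^+ 2.
Proof.
rewrite !(normE2 hip) (ipBl hip) !(ipBr hip) !(ipZl hip) !(ipZr hip).
rewrite (ipC hip z y); ring.
Qed.

Lemma Kol (g : X -> Y) (delta : R) : H g -> 0 < delta ->
  (forall p, KK p -> delta <= ip (ee p) (g p.2)) ->
  ~ (forall f, H f -> EE <= max_dev F f).
Proof.
move=> Hg d0 Hd Hopt.
have [x0 _] := X_nonempty.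
have cg := H_cont Hg.
pose phi p := ip (ee p) (g p.2).
have cphi : continuous phi.
  by apply: (ip_cont hip); [exact: ee_cont | exact: (cont_snd cg)].
pose Q := [set p : A * X | phi p <= delta / 2].
have cQ : compact Q.
  rewrite -(setTI Q); apply: compact_closedI; first exact: cAX.
  have cl : closed [set r : R | r <= delta / 2] by exact: closed_le.
  exact: ((continuous_closedP phi).1 cphi _ cl).
have [pK Kp] := K2.
have E0 : 0 < EE.
  rewrite lt_def (le_trans (normr_ge0 _) (K1 x0 pK)) andbT.
  apply/negP => /eqP E0; have := Hd _ Kp; rewrite /KK E0 in Kp.
  move/eqP: Kp; rewrite normr_eq0 => /eqP ->; rewrite (ip0l hip).
  by rewrite leNgt d0.
have [m2 [m2E Hm2]] : exists m2, m2 < EE ^+ 2 /\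
    forall p, Q p -> `|ee p| ^+ 2 <= m2.
  case: (boolp.pselect (Q !=set0)) => [Q0|Q0].
    have [q Qq Hq] := EVT_max_gen (h := fun p => `|ee p| ^+ 2) Q0 cQ
      (cont_norm2 ee_cont).
    exists (`|ee q| ^+ 2); split => //.
    have : `|ee q| < EE.
      rewrite lt_def K1 // andbT; apply/negP => /eqP eq.
      have := Hd q (esym eq); rewrite /Q /= in Qq; rewrite -/(phi q).
      move: Qq; lra.
    have := normr_ge0 (ee q); nra.
  exists (EE ^+ 2 - 1); split; first lra.
  by move=> p Qp; exfalso; apply: Q0; exists p.
have [G HG] : exists G, forall x, `|g x| ^+ 2 <= G.
  have [c _ Hc] := EVT_max_gen (S := [set: X]) (h := fun x => `|g x| ^+ 2)
    (ex_intro _ x0 I) cX (cont_norm2 cg).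
  by exists (`|g c| ^+ 2) => x; apply: Hc.
have [P HP] : exists P, forall p, `|phi p| <= P.
  have [c _ Hc] := EVT_max_gen (S := [set: A * X]) (h := fun p => `|phi p|)
    (ex_intro _ (a0, x0) I) (cAX cA cX)
    (fun p => continuous_comp (cphi p) (@norm_continuous _ _ _)).
  by exists (`|phi c|) => p; apply: Hc.
have G0 : 0 <= G by apply: le_trans (HG x0); apply: sqr_ge0.
have P0 : 0 <= P by apply: le_trans (HP (a0, x0)).
pose t1 := delta / (2 * (G + 1)).
pose t2 := (EE ^+ 2 - m2) / (2 * (2 * P + G + 1)).
pose t := Num.min 1 (Num.min t1 t2).
have t10 : 0 < t1 by rewrite divr_gt0 // mulr_gt0 // ltr_wpDl.
have t20 : 0 < t2.
  rewrite divr_gt0 ?subr_gt0 // mulr_gt0 // ltr_wpDl //; lra.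
have t0 : 0 < t by rewrite /t !lt_min ltr01 t10 t20.
have t_1 : t <= 1 by rewrite /t ge_min lexx.
have tt1 : t <= t1 by rewrite /t !ge_min lexx orbT.
have tt2 : t <= t2 by rewrite /t !ge_min lexx !orbT.
have tG : t * (2 * (G + 1)) <= delta.
  by rewrite -ler_pdivlMr ?mulr_gt0 // ltr_wpDl.
have tP : t * (2 * (2 * P + G + 1)) <= EE ^+ 2 - m2.
  rewrite -ler_pdivlMr //; rewrite mulr_gt0 // ltr_wpDl //; lra.
pose M2 := Num.max (EE ^+ 2 - t * delta / 2) (m2 + t * (2 * P + G)).
have M2E : M2 < EE ^+ 2.
  rewrite /M2 gt_max; apply/andP; split.
    have : 0 < t * delta by rewrite mulr_gt0.
    lra.
  nra.
have Hb : forall a x, `|F a x - (fs x + t *: g x)| ^+ 2 <= M2.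
  move=> a x.
  have -> : F a x - (fs x + t *: g x) = ee (a, x) - t *: g x.
    by rewrite /ee /= opprD addrA.
  rewrite norm_sub2 -/(phi (a, x)).
  have hg := HG x; have hp := HP (a, x).
  have hn : `|ee (a, x)| <= EE by apply: K1.
  have hn0 := normr_ge0 (ee (a, x)).
  rewrite /M2; case: (boolp.pselect (Q (a, x))) => [Qp|Qp].
    have := Hm2 _ Qp; rewrite /Q /= in Qp.
    have hpp : - P <= phi (a, x) by have := ler_norm (- phi (a, x)); rewrite normrN; lra.
    move=> h2; rewrite le_max; apply/orP; right.
    have h3 : 0 <= t * ((1 - t) * `|g x| ^+ 2).
      by apply: mulr_ge0; [lra | apply: mulr_ge0; [lra | exact: sqr_ge0]].
    have h4 : 0 <= t * (G - `|g x| ^+ 2) by apply: mulr_ge0; lra.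
    have h5 : 0 <= t * (phi (a, x) + P) by apply: mulr_ge0; lra.
    nra.
  rewrite le_max; apply/orP; left.
  have hq : delta / 2 < phi (a, x) by rewrite ltNge; apply/negP.
  have h4 : 0 <= t * (t * (G - `|g x| ^+ 2)).
    by apply: mulr_ge0; [lra | apply: mulr_ge0; lra].
  have h5 : 0 <= t * (phi (a, x) - delta / 2) by apply: mulr_ge0; lra.
  have h6 : 0 <= t * (delta - t * (2 * (G + 1))) by apply: mulr_ge0; lra.
  have h7 : `|ee (a, x)| ^+ 2 <= EE ^+ 2 by nra.
  nra.
have M20 : 0 <= M2 by apply: le_trans (Hb a0 x0); apply: sqr_ge0.
have Hft := H_lin t Hfs Hg.
have := Hopt _ Hft.
apply/negP; rewrite -ltNge.
apply: (le_lt_trans (y := Num.sqrt M2)).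
  apply: (max_dev_le a0 x0) => a x.
  rewrite -(ler_pXn2r (n := 2)) ?nnegrE ?sqrtr_ge0 ?normr_ge0 //.
  by rewrite sqr_sqrtr.
have hs := sqrtr_ge0 M2; have hs2 := sqr_sqrtr M20.
nra.
Qed.

Lemma cont_sumR (T : topologicalType) m (h : 'I_m -> T -> R) :
  (forall i, continuous (h i)) -> continuous (fun t => \sum_(i < m) h i t).
Proof.
elim: m h => [|m IH] h hh t.
  under eq_fun do rewrite big_ord0; exact: cvg_cst.
under eq_fun do rewrite big_ord_recr /=.
apply: cvgD; first exact: (IH (fun i => h (widen_ord (leqnSn m) i))).
exact: hh.
Qed.

Definition vv (p : A * X) (j : 'I_n) := ip (ee p) (b j p.2).

Lemma vv_cont j : continuous (fun p => vv p j).
Proof. apply: (ip_cont hip); [exact: ee_cont | apply: cont_snd; exact: hbc]. Qed.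

Local Notation Z := (prod_topology (fun _ : 'I_n.+1 => (R * (A * X))%type)).

Definition ww (z : Z) (j : 'I_n) := \sum_(i < n.+1) (z i).1 * vv (z i).2 j.
Definition phiZ (z : Z) := \sum_(j < n) ww z j ^+ 2.
Definition TT := [set z : Z | forall i, (`[0, 1]%classic `*` KK) (z i)].
Definition CC := [set z : Z | \sum_(i < n.+1) (z i).1 = 1].

Lemma proj_cont (i : 'I_n.+1) : continuous (fun z : Z => z i).
Proof. exact: proj_continuous. Qed.

Lemma fst_cont (i : 'I_n.+1) : continuous (fun z : Z => (z i).1).
Proof.
move=> z; apply: (continuous_comp (f := fun z : Z => z i) (g := fst)).
  exact: proj_cont.
exact: cvg_fst.
Qed.

Lemma snd_cont (i : 'I_n.+1) : continuous (fun z : Z => (z i).2).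
Proof.
move=> z; apply: (continuous_comp (f := fun z : Z => z i) (g := snd)).
  exact: proj_cont.
exact: cvg_snd.
Qed.

Lemma phiZ_cont : continuous phiZ.
Proof.
apply: cont_sumR => j.
have hw : continuous (fun z : Z => ww z j).
  rewrite /ww; apply: (cont_sumR (h := fun i (z : Z) => (z i).1 * vv (z i).2 j)) => i y.
  apply: (continuousM (s := fun z : Z => (z i).1) (t := fun z : Z => vv (z i).2 j)).
    exact: fst_cont.
  apply: (continuous_comp (f := fun z : Z => (z i).2) (g := fun p => vv p j)).
    exact: snd_cont.
  exact: vv_cont.
have -> : (fun t : Z => ww t j ^+ 2) = (fun t => ww t j * ww t j).
  by apply: boolp.funext => t; rewrite expr2.
move=> z; by apply: (continuousM (s := fun z : Z => ww z j) (t := fun z : Z => ww z j)); apply: hw.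
Qed.

Lemma TT_compact : compact TT.
Proof.
have := @tychonoff _ (fun _ : 'I_n.+1 => (R * (A * X))%type)
  (fun _ => `[0, 1]%classic `*` KK) (fun _ => compact_setX
     (@segment_compact R 0 1) KK_compact).
by [].
Qed.

Lemma CC_closed : closed CC.
Proof.
have cl : closed [set r : R | r = 1] by exact: closed_eq.
exact: ((continuous_closedP _).1 (cont_sumR fst_cont) _ cl).
Qed.

Lemma SS_compact : compact (TT `&` CC).
Proof. exact: compact_closedI TT_compact CC_closed. Qed.

Lemma quad_lem (a c : R) : 0 <= c ->
  (forall t, 0 < t -> t <= 1 -> 0 <= 2 * a + t * c) -> 0 <= a.
Proof.
move=> c0 H0; rewrite leNgt; apply/negP => a0'.
have ca : 0 < c - a by lra.
pose t := - a / (c - a).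
have t0 : 0 < t by rewrite /t divr_gt0 //; lra.
have t1 : t <= 1 by rewrite /t ler_pdivrMr // mul1r; lra.
have := H0 t t0 t1.
have -> : 2 * a + t * c = a * (c - 2 * a) / (c - a).
  by rewrite /t; field; rewrite subr_eq0; apply/eqP => E; move: ca; rewrite E subrr ltxx.
rewrite leNgt => /negP; apply; rewrite pmulr_llt0 ?invr_gt0 //.
by rewrite nmulr_rlt0 //; lra.
Qed.

Lemma drop_zero m (lam f : 'I_m.+1 -> R) j0 : lam j0 = 0 ->
  \sum_(i < m.+1) lam i * f i = \sum_(i < m) lam (lift j0 i) * f (lift j0 i).
Proof. by move=> l0; rewrite (bigD1_ord j0) //= l0 mul0r add0r. Qed.

Lemma sum_expand m (w u : 'I_m -> R) t :
  \sum_(j < m) ((1 - t) * w j + t * u j) ^+ 2 =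
  \sum_(j < m) w j ^+ 2 + t * (2 * \sum_(j < m) w j * (u j - w j)
     + t * \sum_(j < m) (u j - w j) ^+ 2).
Proof.
rewrite (eq_bigr (fun j => w j ^+ 2 + t * (2 * (w j * (u j - w j))
   + t * (u j - w j) ^+ 2))); last by move=> j _; ring.
by rewrite big_split /= -mulr_sumr big_split /= -!mulr_sumr.
Qed.

Lemma SS_facts (z : Z) : (TT `&` CC) z ->
  [/\ forall i, 0 <= (z i).1, \sum_(i < n.+1) (z i).1 = 1 & forall i, KK (z i).2].
Proof.
move=> [zT zC]; split => // i; have [h1 h2] := zT i.
  by move: h1; rewrite /= in_itv /= => /andP [].
exact: h2.
Qed.

Lemma mem_SS (z : Z) : (forall i, 0 <= (z i).1) -> \sum_(i < n.+1) (z i).1 = 1 ->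
  (forall i, KK (z i).2) -> (TT `&` CC) z.
Proof.
move=> h0 h1 hK; split => // i; split => //=; rewrite in_itv /= h0 /=.
rewrite -h1 (bigD1 i) //= lerDl; apply: sumr_ge0 => k _; exact: h0.
Qed.

Lemma improve (zs : Z) (p : A * X) t : (TT `&` CC) zs -> KK p -> 0 < t -> t <= 1 ->
  exists z' : Z, (TT `&` CC) z' /\ forall j, ww z' j = (1 - t) * ww zs j + t * vv p j.
Proof.
move=> /SS_facts [z0 z1 zK] Kp t0 t1.
pose lam (i : 'I_n.+2) := if unlift ord_max i is Some i' then (1 - t) * (zs i').1 else t.
pose pts (i : 'I_n.+2) := if unlift ord_max i is Some i' then (zs i').2 else p.
have lam0 i : 0 <= lam i.
  rewrite /lam; case: unlift => [i'|]; last lra.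
  by apply: mulr_ge0; [lra | exact: z0].
have lam1 : \sum_i lam i = 1.
  rewrite (bigD1_ord ord_max) //= /lam unlift_none.
  under eq_bigr do rewrite liftK.
  by rewrite -mulr_sumr z1; ring.
have lamv j : \sum_i lam i * vv (pts i) j = (1 - t) * ww zs j + t * vv p j.
  rewrite (bigD1_ord ord_max) //= /lam /pts unlift_none.
  under eq_bigr do rewrite liftK.
  rewrite /ww mulr_sumr addrC; congr (_ + _); apply: eq_bigr => i _; ring.
have [lam' [l0 l1 lv [j0 lj0]]] :=
  @carath1 R n n.+2 lam (fun i j => vv (pts i) j) (ltnSn n.+1) lam0 lam1.
pose z' : Z := fun i => (lam' (lift j0 i), pts (lift j0 i)).
exists z'; split.
  apply: mem_SS => //.
  - by move=> i; exact: l0.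
  - by rewrite -l1 [RHS](bigD1_ord j0) //= lj0 add0r.
  - move=> i; rewrite /z' /= /pts; case: unlift => // i'; exact: zK.
move=> j; rewrite -lamv -lv (drop_zero _ lj0) //.
Qed.

Lemma hard_dir : (forall f, H f -> EE <= max_dev F f) ->
  exists k : nat, (1 <= k <= n.+1)%N /\
    exists (a : 'I_k -> A) (x : 'I_k -> X) (lam : 'I_k -> R),
      [/\ forall i, 0 < lam i,
          \sum_(i < k) lam i = 1,
          (forall f, H f ->
             \sum_(i < k) lam i * ip (F (a i) (x i) - fs (x i)) (f (x i)) = 0)
        & forall i,
            `|F (a i) (x i) - fs (x i)| = unorm (fun y => F (a i) y - fs y) /\
            unorm (fun y => F (a i) y - fs y) = max_dev F fs].
Proof.
move=> Hopt.
have [pK Kp] := K2.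
pose z0 : Z := fun i => ((if i == ord0 then 1 else 0), pK).
have S0 : (TT `&` CC) z0.
  apply: mem_SS => //.
    by move=> i; rewrite /z0 /=; case: ifP => _; lra.
  rewrite (bigD1 ord0) //= big1 ?addr0 // => i /negbTE.
  by move=> ->.
have [zs Szs Hmin] := EVT_min_gen (ex_intro _ z0 S0) SS_compact phiZ_cont.
have [l0 l1 lK] := SS_facts Szs.
have phi_ge0 : 0 <= phiZ zs by apply: sumr_ge0 => j _; exact: sqr_ge0.
have phi0 : phiZ zs = 0.
  case: (eqVneq (phiZ zs) 0) => // hne; exfalso.
  have pos : 0 < phiZ zs by rewrite lt_def hne phi_ge0.
  apply: (Kol (g := fun x => \sum_j ww zs j *: b j x) (delta := phiZ zs)) => //.
    exact: H_basis.
  move=> p Kp'; rewrite /= (ip_sumr hip).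
  set w := ww zs; set u := fun j => vv p j.
  have -> : \sum_(i < n) w i * ip (ee p) (b i p.2) = \sum_(j < n) w j * u j by [].
  suff : 0 <= \sum_(j < n) w j * (u j - w j).
    have -> : \sum_(j < n) w j * (u j - w j) =
       \sum_(j < n) w j * u j - phiZ zs.
      rewrite /phiZ -sumrB; apply: eq_bigr => j _; by rewrite mulrBr expr2.
    lra.
  apply: (quad_lem (c := \sum_(j < n) (u j - w j) ^+ 2)).
    by apply: sumr_ge0 => j _; exact: sqr_ge0.
  move=> t t0 t1; have [z' [Sz' Hw]] := improve Szs Kp' t0 t1.
  have := Hmin z' Sz'.
  rewrite /phiZ (eq_bigr _ (fun j _ => congr1 (fun r => r ^+ 2) (Hw j))).
  rewrite sum_expand -/w -/u lerDl pmulr_rge0 //.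
have ww0 j : ww zs j = 0.
  have := psumr_eq0P (P := xpredT) (fun j _ => sqr_ge0 (ww zs j)) phi0 (i := j) isT.
  by move/eqP; rewrite sqrf_eq0 => /eqP.
pose P := [pred i : 'I_n.+1 | 0 < (zs i).1].
have red (G : 'I_n.+1 -> R) : \sum_(i < #|P|) (zs (enum_val i)).1 * G (enum_val i)
    = \sum_(i < n.+1) (zs i).1 * G i.
  rewrite [RHS](bigID P) /= [X in _ = _ + X]big1 ?addr0; last first.
    move=> i Pi; have : (zs i).1 = 0.
      by apply/eqP; rewrite eq_le l0 andbT leNgt; exact: Pi.
    by move=> ->; rewrite mul0r.
  by rewrite (big_enum_val (A := P) (fun i => (zs i).1 * G i)).
have s1 : \sum_(i < #|P|) (zs (enum_val i)).1 = 1.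
  have := red (fun _ => 1); under eq_bigr do rewrite mulr1.
  by under [X in _ = X -> _]eq_bigr do rewrite mulr1; rewrite l1.
exists #|P|; split.
  apply/andP; split.
    apply/card_gt0P.
    case: (boolp.pselect (exists i, 0 < (zs i).1)) => [[i hi]|hn]; first by exists i.
    exfalso; have : \sum_(i < n.+1) (zs i).1 = 0.
      apply: big1 => i _; apply/eqP; rewrite eq_le l0 andbT leNgt.
      by apply/negP => h; apply: hn; exists i.
    by rewrite l1 => /eqP; rewrite oner_eq0.
  by have := max_card P; rewrite card_ord.
exists (fun i => (zs (enum_val i)).2.1), (fun i => (zs (enum_val i)).2.2),
   (fun i => (zs (enum_val i)).1); split => //.
- move=> i; exact: (enum_valP i).
- move=> f; rewrite hHe => -[c ->].
  rewrite (red (fun i => ip (ee (zs i).2) (\sum_(j < n) c j *: b j (zs i).2.2))).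
  under eq_bigr do rewrite (ip_sumr hip).
  under eq_bigr do rewrite mulr_sumr.
  rewrite exchange_big /=; apply: big1 => j _.
  transitivity (c j * ww zs j); last by rewrite ww0 mulr0.
  rewrite /ww mulr_sumr; apply: eq_bigr => i _; rewrite /vv; ring.
- move=> i; exact: (K3 (lK (enum_val i))).
Qed.
End Main.

Unset Implicit Arguments.
Set Strict Implicit.

Theorem corollary3 (R : realType) (X : topologicalType) (Y : normedModType R)
  (ip : Y -> Y -> R) (H : set (X -> Y)) (n : nat) (A : topologicalType)
  (F : A -> X -> Y) (fs : X -> Y) :
  compact [set: X] -> hausdorff_space X ->
  is_inner_product ip ->
  (1 <= n)%N -> subspace_of_dim H n ->
  compact [set: A] -> hausdorff_space A -> [set: A] !=set0 ->
  unif_continuous_family F ->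
  H fs ->
  (forall f, H f -> max_dev F fs <= max_dev F f) <->
  exists k : nat, (1 <= k <= n.+1)%N /\
    exists (a : 'I_k -> A) (x : 'I_k -> X) (lam : 'I_k -> R),
      [/\ forall i, 0 < lam i,
          \sum_(i < k) lam i = 1,
          (forall f, H f ->
             \sum_(i < k) lam i * ip (F (a i) (x i) - fs (x i)) (f (x i)) = 0)
        & forall i,
            `|F (a i) (x i) - fs (x i)| = unorm (fun y => F (a i) y - fs y) /\
            unorm (fun y => F (a i) y - fs y) = max_dev F fs].
Proof.
move=> cX _ hip n1 [b [hbc hbi hHe]] cA _ [a0 _] hF Hfs; split.
  move=> Hopt.
  exact: (hard_dir cX hip n1 hbc hbi hHe cA hF Hfs a0 Hopt).
exact: (@easy_dir _ _ _ _ _ _ _ _ _ b cX hip n1 hbc hbi hHe cA hF Hfs a0).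
Qed.
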